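(* Assume $g$ satisfies (Hg) and let $a\in(0,1)$, $k>0$. Then there exists $d_0=d_0(a,k)>0$ such that for every $0<d\le d_0$ and every sequence $(s_i)_{i\in\mathbb Z}\subset\{0,1\}$ there is at least one function $\Phi:\mathbb R\to\mathbb R$ satisfying $$0=d\big(k\Phi(\xi+1)-(k+1)\Phi(\xi)+\Phi(\xi-1)\big)+g(\Phi(\xi);a)\quad\text{for all }\xi\in\mathbb R$$ (i.e. a solution of the traveling wave equation with $c=0$) such that for every $i\in\mathbb Z$: $\Phi(i)\in[0,a)$ if $s_i=0$, and $\Phi(i)\in(a,1]$ if $s_i=1$.
   Context: A function $g:\mathbb R\times[0,1]\to\mathbb R$, $(u,a)\mapsto g(u;a)$, satisfies (Hg) if it is $C^1$ and for every $a\in(0,1)$: $g(0;a)=g(a;a)=g(1;a)=0$, $g'(0;a)<0$, $g'(1;a)<0$, $g'(a;a)>0$ (where $g'=\partial_u g$), $g(v;a)>0$ for $v\in(-\infty,0)\cup(a,1)$ and $g(v;a)<0$ for $v\in(0,a)\cup(1,\infty)$. *)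

(* Defs.v *)
From Stdlib Require Import Reals.
From Coquelicot Require Import Coquelicot.
Open Scope R_scope.

Definition cont_on_strip (h : R -> R -> R) : Prop :=
  forall u a, 0 <= a <= 1 ->
    forall eps : R, eps > 0 -> exists delta : R, delta > 0 /\
      forall v b, 0 <= b <= 1 -> Rabs (v - u) < delta -> Rabs (b - a) < delta ->
        Rabs (h v b - h u a) < eps.

(* g is C^1 on R x [0,1]: both partial derivatives exist (one-sided in a at the
   endpoints a = 0, 1) and are jointly continuous on R x [0,1]. *)
Definition C1_strip (g : R -> R -> R) : Prop :=
  exists gu ga : R -> R -> R,
    cont_on_strip gu /\ cont_on_strip ga /\
    (forall u a, 0 <= a <= 1 -> is_derive (fun v => g v a) u (gu u a)) /\
    (forall u a, 0 <= a <= 1 ->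
       forall eps : R, eps > 0 -> exists delta : R, delta > 0 /\
         forall b, 0 <= b <= 1 -> b <> a -> Rabs (b - a) < delta ->
           Rabs ((g u b - g u a) / (b - a) - ga u a) < eps).

Definition dg (g : R -> R -> R) (u a : R) : R := Derive (fun v => g v a) u.

Definition Hg (g : R -> R -> R) : Prop :=
  C1_strip g /\
  forall a, 0 < a < 1 ->
    g 0 a = 0 /\ g a a = 0 /\ g 1 a = 0 /\
    dg g 0 a < 0 /\ dg g 1 a < 0 /\ dg g a a > 0 /\
    (forall v, (v < 0 \/ (a < v < 1)) -> g v a > 0) /\
    (forall v, ((0 < v < a) \/ 1 < v) -> g v a < 0).

(* Main.v *)
Require Import Defs.
From Stdlib Require Import Reals ZArith.
From Coquelicot Require Import Coquelicot.
From Stdlib Require Import Lra Lia Classical.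
Open Scope R_scope.

Lemma cont_ed (f : R -> R) (x : R) : continuity_pt f x ->
  forall eps, 0 < eps -> exists del, 0 < del /\
    forall y, Rabs (y - x) < del -> Rabs (f y - f x) < eps.
Proof.
  intros H eps He.
  destruct (H eps He) as [del [Hdel Hy]].
  exists del; split; auto.
  intros y Hyx. destruct (Req_dec y x) as [->|Hne].
  - rewrite Rminus_eq_0, Rabs_R0; auto.
  - apply (Hy y). split. split; [exact I| auto]. exact Hyx.
Qed.

Lemma mono_lin d k x y x' y' : 0 < d -> 0 < k -> x' <= x -> y' <= y ->
  d * (k * x' + y') <= d * (k * x + y).
Proof. intros. apply Rmult_le_compat_l; [lra|].
  apply Rplus_le_compat; [apply Rmult_le_compat_l; lra| lra]. Qed.

Lemma exists_U (gv : R -> R) (d k b0 b1 : R) (s : Z -> bool) :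
  (forall x, continuity_pt gv x) -> 0 < d -> 0 < k -> 0 <= b0 <= 1 -> 0 <= b1 <= 1 ->
  gv 0 = 0 -> gv 1 = 0 -> gv b0 <= - (d * (k + 1)) -> d * (k + 1) <= gv b1 ->
  exists U : Z -> R,
    (forall i, d * (k * U (i + 1)%Z - (k + 1) * U i + U (i - 1)%Z) + gv (U i) = 0) /\
    (forall i, (if s i then b1 else 0) <= U i <= (if s i then 1 else b0)).
Proof.
  intros Hc Hd Hk Hb0 Hb1 H0 H1 Hgb0 Hgb1.
  pose (lo := fun i => if s i then b1 else 0).
  pose (hi := fun i => if s i then 1 else b0).
  pose (G := fun v => gv v - d * (k + 1) * v).
  pose (F := fun (u : Z -> R) i => d * (k * u (i + 1)%Z + u (i - 1)%Z) + G (u i)).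
  pose (sub := fun u : Z -> R => (forall i, lo i <= u i <= hi i) /\ (forall i, 0 <= F u i)).
  assert (HG : forall x eps, 0 < eps -> exists del, 0 < del /\
             forall y, Rabs (y - x) < del -> Rabs (G y - G x) < eps).
  { intros x. apply cont_ed. unfold G.
    apply continuity_pt_minus; [apply Hc|].
    apply continuity_pt_mult; [apply continuity_pt_const; intros ? ?; reflexivity|apply continuity_pt_id]. }
  assert (Hlo01 : forall i, 0 <= lo i <= 1) by (intro i; unfold lo; destruct (s i); lra).
  assert (Hhi01 : forall i, 0 <= hi i <= 1) by (intro i; unfold hi; destruct (s i); lra).
  assert (Hpos : forall x y, 0 <= x -> 0 <= y -> 0 <= d * (k * x + y)).
  { intros x y Hx Hy. apply Rmult_le_pos; [lra|]. apply Rplus_le_le_0_compat; [|lra].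
    apply Rmult_le_pos; lra. }
  assert (Hlo : sub lo).
  { split.
    - intro i; unfold lo, hi; destruct (s i); lra.
    - intro i. unfold F, G.
      assert (0 <= d * (k * lo (i + 1)%Z + lo (i - 1)%Z)).
      { apply Hpos; [apply Hlo01|apply Hlo01]. }
      unfold lo at 3 4; destruct (s i).
      + assert (d * (k + 1) * b1 <= d * (k + 1)).
        { rewrite <- (Rmult_1_r (d * (k + 1))) at 2. apply Rmult_le_compat_l; [|lra].
          apply Rmult_le_pos; lra. }
        lra.
      + rewrite Rmult_0_r, H0. lra. }
  assert (Hex : forall i, {m | is_lub (fun x => exists u, sub u /\ x = u i) m}).
  { intro i. apply completeness.
    - exists 1. intros x [u [[Hb _] ->]]. specialize (Hb i). pose proof (Hhi01 i). lra.
    - exists (lo i). exists lo. split; auto. }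
  pose (U := fun i => proj1_sig (Hex i)).
  assert (HU : forall i, is_lub (fun x => exists u, sub u /\ x = u i) (U i)).
  { intro i. exact (proj2_sig (Hex i)). }
  assert (Hle : forall u, sub u -> forall i, u i <= U i).
  { intros u Hu i. apply (HU i). exists u; auto. }
  assert (Hbox : forall i, lo i <= U i <= hi i).
  { intro i. split.
    - apply Hle; auto.
    - apply (HU i). intros x [u [[Hb _] ->]]. apply Hb. }
  assert (C1 : forall i, 0 <= F U i).
  { intro i. destruct (Rle_or_lt 0 (F U i)) as [h|h]; auto. exfalso.
    destruct (HG (U i) (- F U i)) as [del [Hdel Hy]]; [lra|].
    assert (Hex2 : exists u, sub u /\ U i - del < u i).
    { apply not_all_not_ex. intro Hn. destruct (HU i) as [_ Hm].
      assert (U i <= U i - del); [|lra].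
      apply Hm. intros x [u [Hu ->]]. apply Rnot_lt_le. intro. apply (Hn u). auto. }
    destruct Hex2 as [u [Hu Hui]].
    pose proof (Hle u Hu) as Hl.
    specialize (Hy (u i)).
    assert (Rabs (u i - U i) < del) as Ha.
    { pose proof (Hl i). apply Rabs_def1; lra. }
    specialize (Hy Ha). apply Rabs_def2 in Hy.
    destruct Hu as [_ Hu]. specialize (Hu i).
    pose proof (mono_lin d k (U (i+1)%Z) (U (i-1)%Z) (u (i+1)%Z) (u (i-1)%Z) Hd Hk (Hl _) (Hl _)).
    unfold F in *. lra. }
  assert (C2 : forall i, F U i <= 0).
  { intro i. destruct (Rle_or_lt (F U i) 0) as [h|h]; auto. exfalso.
    destruct (Rle_or_lt (hi i) (U i)) as [Hh|Hh].
    - assert (U i = hi i) as Heq by (pose proof (Hbox i); lra).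
      assert (d * (k * U (i + 1)%Z + U (i - 1)%Z) <= d * (k * 1 + 1)).
      { apply mono_lin; auto; pose proof (Hbox (i+1)%Z); pose proof (Hbox (i-1)%Z);
        pose proof (Hhi01 (i+1)%Z); pose proof (Hhi01 (i-1)%Z); lra. }
      unfold F, G in h. rewrite Heq in h. unfold hi in h. destruct (s i).
      + rewrite H1 in h. lra.
      + assert (0 <= d * (k + 1) * b0) by (apply Rmult_le_pos; [apply Rmult_le_pos|]; lra).
        lra.
    - destruct (HG (U i) (F U i)) as [del [Hdel Hy]]; [lra|].
      pose (v := Rmin (hi i) (U i + del / 2)).
      assert (Hv1 : U i < v).
      { unfold v. apply Rmin_glb_lt; lra. }
      assert (Hv2 : v <= hi i) by apply Rmin_l.
      assert (Hv3 : v <= U i + del / 2) by apply Rmin_r.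
      pose (u' := fun j => if Z.eq_dec j i then v else U j).
      assert (Hu'ge : forall j, U j <= u' j).
      { intro j. unfold u'. destruct (Z.eq_dec j i); [subst; lra| lra]. }
      assert (Hsub : sub u').
      { split.
        - intro j. unfold u'. destruct (Z.eq_dec j i); [subst; pose proof (Hbox i); lra| apply Hbox].
        - intro j. destruct (Z.eq_dec j i) as [->|Hne].
          + unfold F. unfold u' at 1 2 3.
            destruct (Z.eq_dec (i+1) i); [lia|]. destruct (Z.eq_dec (i-1) i); [lia|].
            destruct (Z.eq_dec i i); [|congruence].
            assert (Rabs (v - U i) < del) as Ha by (apply Rabs_def1; lra).
            specialize (Hy v Ha). apply Rabs_def2 in Hy.
            unfold F in h, Hy. lra.
          + unfold F. 
            assert (u' j = U j) as Hj by (unfold u'; destruct (Z.eq_dec j i); [congruence|reflexivity]).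
            rewrite Hj.
            pose proof (mono_lin d k (u' (j+1)%Z) (u' (j-1)%Z) (U (j+1)%Z) (U (j-1)%Z) Hd Hk (Hu'ge _) (Hu'ge _)).
            specialize (C1 j). unfold F in C1. lra. }
      pose proof (Hle u' Hsub i) as Hc'. unfold u' in Hc'.
      destruct (Z.eq_dec i i); [lra|congruence]. }
  exists U. split.
  - intro i. specialize (C1 i). specialize (C2 i).
    assert (d * (k * U (i + 1)%Z - (k + 1) * U i + U (i - 1)%Z) + gv (U i) = F U i)
      by (unfold F, G; ring).
    lra.
  - exact Hbox.
Qed.

Lemma Int_part_IZR (n : Z) : Int_part (IZR n) = n.
Proof.
  unfold Int_part. rewrite <- (tech_up (IZR n) (n + 1)).
  - ring.
  - rewrite plus_IZR; lra.
  - rewrite plus_IZR; lra.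
Qed.

Theorem proposition2p4 (g : R -> R -> R) (a k : R) :
  Hg g -> 0 < a < 1 -> 0 < k ->
  exists d0 : R, d0 > 0 /\
    forall (d : R) (s : Z -> bool), 0 < d <= d0 ->
      exists Phi : R -> R,
        (forall xi : R,
           0 = d * (k * Phi (xi + 1) - (k + 1) * Phi xi + Phi (xi - 1)) + g (Phi xi) a) /\
        (forall i : Z,
           (s i = false -> 0 <= Phi (IZR i) < a) /\
           (s i = true -> a < Phi (IZR i) <= 1)).
Proof.
  intros [HC Hprop] Ha Hk.
  destruct (Hprop a Ha) as (g0 & _ & g1 & _ & _ & _ & Hpos & Hneg).
  destruct HC as (gu & ga' & _ & _ & Hder & _).
  assert (Hgb0 : g (a/2) a < 0) by (apply Hneg; left; lra).
  assert (Hgb1 : g ((1+a)/2) a > 0) by (apply Hpos; right; lra).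
  pose (m := Rmin (- g (a/2) a) (g ((1+a)/2) a)).
  assert (Hm : 0 < m) by (apply Rmin_glb_lt; lra).
  exists (m / (k + 1)). split.
  { apply Rdiv_lt_0_compat; lra. }
  intros d s [Hd Hdd].
  assert (Hdk : d * (k + 1) <= m).
  { apply (Rmult_le_compat_r (k+1)) in Hdd; [|lra].
    replace (m / (k + 1) * (k + 1)) with m in Hdd by (field; lra). exact Hdd. }
  assert (m <= - g (a/2) a) by apply Rmin_l.
  assert (m <= g ((1+a)/2) a) by apply Rmin_r.
  destruct (exists_U (fun v => g v a) d k (a/2) ((1+a)/2) s) as [U [HUe HUb]];
    auto; try lra.
  { intro x. apply continuity_pt_filterlim. apply (@ex_derive_continuous R_AbsRing R_NormedModule (fun v => g v a) x).
    exists (gu x a). exact (Hder x a ltac:(lra)). }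
  pose (Phi := fun x => if Req_EM_T x (IZR (Int_part x)) then U (Int_part x) else 0).
  assert (PhiZ : forall n, Phi (IZR n) = U n).
  { intro n. unfold Phi. rewrite Int_part_IZR.
    destruct (Req_EM_T (IZR n) (IZR n)); [reflexivity|congruence]. }
  assert (PhiN : forall x, (forall n, x <> IZR n) -> Phi x = 0).
  { intros x Hx. unfold Phi. destruct (Req_EM_T x (IZR (Int_part x))) as [e|]; auto.
    exfalso. exact (Hx _ e). }
  exists Phi. split.
  - intro xi. destruct (classic (exists n, xi = IZR n)) as [[n ->]|Hn].
    + replace (IZR n + 1) with (IZR (n + 1)) by (rewrite plus_IZR; ring).
      replace (IZR n - 1) with (IZR (n - 1)) by (rewrite minus_IZR; ring).
      rewrite !PhiZ. specialize (HUe n). simpl in HUe. lra.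
    + rewrite (PhiN xi), (PhiN (xi + 1)), (PhiN (xi - 1)).
      * rewrite g0. ring.
      * intros n e. apply Hn. exists (n + 1)%Z. rewrite plus_IZR. lra.
      * intros n e. apply Hn. exists (n - 1)%Z. rewrite minus_IZR. lra.
      * intros n e. apply Hn. exists n. exact e.
  - intro i. rewrite PhiZ. specialize (HUb i). split; intro e; rewrite e in HUb; lra.
Qed.
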